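(* Let $\sigma$ be a $d$-dimensional quantum state with $\sigma\ge\gamma I$ for some $\gamma>0$, let $\rho_1,\dots,\rho_T$ be $d$-dimensional quantum states and $\rho=\frac1T\sum_{t=1}^T\rho_t$. Then $$\frac1T\sum_{t=1}^T\big(1+D_{\chi^2}(\rho_t\,\|\,\sigma)\big)\le\sqrt{\frac d\gamma}\,D_{\chi^2}(\rho\,\|\,\sigma)^{1/2}+d.$$
   Context: Bures $\chi^2$-divergence: writing $\sigma=U\,\mathrm{diag}(q_1,\dots,q_d)U^\dagger$ with $U$ unitary and $\rho'=U^\dagger\rho U$, $D_{\chi^2}(\rho\,\|\,\sigma)=\sum_{i,j=1}^d\frac{2}{q_i+q_j}|\rho'_{ij}|^2-1$. *)

(* Defs.v *)
From HB Require Import structures.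
From mathcomp Require Import all_boot all_order all_algebra.
Set Implicit Arguments. Unset Strict Implicit. Unset Printing Implicit Defensive.
Import Order.TTheory GRing.Theory Num.Theory.
Local Open Scope ring_scope.

Definition adjmx {C : numClosedFieldType} m n (A : 'M[C]_(m, n)) : 'M[C]_(n, m) :=
  (map_mx Num.conj A)^T.

Definition psdmx {C : numClosedFieldType} d (A : 'M[C]_d) : Prop :=
  A = adjmx A /\ forall v : 'rV[C]_d, 0 <= (v *m A *m adjmx v) 0 0.

Definition density {C : numClosedFieldType} d (rho : 'M[C]_d) : Prop :=
  psdmx rho /\ \tr rho = 1.

(* Bures chi^2 divergence, computed from a decomposition
   sigma = U diag(q_1..q_d) U^dagger  with U unitary:
   D(rho || sigma) = sum_{i,j} 2/(q_i+q_j) |rho'_{ij}|^2 - 1,  rho' = U^dagger rho U. *)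
Definition bures_chi2 {C : numClosedFieldType} d (U : 'M[C]_d) (q : 'I_d -> C)
    (rho : 'M[C]_d) : C :=
  let rho' := adjmx U *m rho *m U in
  \sum_(i < d) \sum_(j < d) (2 / (q i + q j)) * `|rho' i j| ^+ 2 - 1.

(* Main.v *)
Require Import Defs.
From HB Require Import structures.
From mathcomp Require Import all_boot all_order all_algebra.
From mathcomp Require Import ring.
Import Order.TTheory GRing.Theory Num.Theory.
Local Open Scope ring_scope.
Set Implicit Arguments. Unset Strict Implicit.
Section Aux.
Variable C : numClosedFieldType.

Lemma adjmxE m n (A : 'M[C]_(m, n)) : adjmx A = (A ^t* )%sesqui.
Proof. by rewrite /adjmx map_trmx. Qed.

Lemma adjmx_mul m n p (A : 'M[C]_(m, n)) (B : 'M[C]_(n, p)) :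
  adjmx (A *m B) = adjmx B *m adjmx A.
Proof. by rewrite /adjmx map_mxM trmx_mul. Qed.

Lemma adjmxK m n (A : 'M[C]_(m, n)) : adjmx (adjmx A) = A.
Proof. by apply/matrixP=> i j; rewrite !mxE conjCK. Qed.

Lemma adjmxD m n (A B : 'M[C]_(m, n)) : adjmx (A + B) = adjmx A + adjmx B.
Proof. by apply/matrixP=> i j; rewrite !mxE rmorphD. Qed.

Lemma adjmxZ m n a (A : 'M[C]_(m, n)) : adjmx (a *: A) = a^* *: adjmx A.
Proof. by apply/matrixP=> i j; rewrite !mxE rmorphM. Qed.

Lemma adjmx_delta n (i : 'I_n) : adjmx (delta_mx 0 i : 'rV[C]_n) = delta_mx i 0.
Proof.
apply/matrixP=> k l; rewrite !mxE.
by case: (_ == _); case: (_ == _); rewrite /= ?rmorph1 ?rmorph0.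
Qed.

Lemma quad_delta n (A : 'M[C]_n) i j :
  ((delta_mx 0 i : 'rV[C]_n) *m A *m adjmx (delta_mx 0 j : 'rV[C]_n)) 0 0 = A i j.
Proof.
by rewrite adjmx_delta -rowE -colE !mxE.
Qed.

Lemma unitary_adjL n (U : 'M[C]_n) : U \is unitarymx -> adjmx U *m U = 1%:M.
Proof. by move=> HU; rewrite adjmxE -[(U ^t* )%sesqui]mul1mx mulmxKtV. Qed.

Lemma unitary_adjR n (U : 'M[C]_n) : U \is unitarymx -> U *m adjmx U = 1%:M.
Proof. by move=> /unitarymxP; rewrite adjmxE. Qed.

Lemma psd_conj n (A U : 'M[C]_n) : psdmx A -> psdmx (adjmx U *m A *m U).
Proof.
case=> HA Hv; split.
  by rewrite !adjmx_mul adjmxK -HA mulmxA.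
move=> v; have := Hv (v *m adjmx U).
by rewrite adjmx_mul adjmxK !mulmxA.
Qed.

Lemma trace_conj n (A U : 'M[C]_n) : U \is unitarymx ->
  \tr (adjmx U *m A *m U) = \tr A.
Proof.
by move=> HU; rewrite mxtrace_mulC mulmxA unitary_adjR // mul1mx.
Qed.

Lemma psd_diag n (A : 'M[C]_n) i : psdmx A -> 0 <= A i i.
Proof. by case=> _ /(_ (delta_mx 0 i : 'rV[C]_n)); rewrite quad_delta. Qed.

Lemma psd_herm n (A : 'M[C]_n) i j : psdmx A -> A j i = (A i j)^*.
Proof. by case=> HA _; rewrite {1}HA !mxE. Qed.

End Aux.
Section Aux2.
Variable C : numClosedFieldType.

Lemma quad_expand n (A : 'M[C]_n) i j a b :
  let v := a *: (delta_mx 0 i : 'rV[C]_n) + b *: delta_mx 0 j in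
  (v *m A *m adjmx v) 0 0 =
  a * a^* * A i i + a * b^* * A i j + b * a^* * A j i + b * b^* * A j j.
Proof.
have aE : forall (M N : 'M[C]_1), (M + N) 0 0 = M 0 0 + N 0 0 by move=> M N; rewrite mxE.
have sE : forall s (M : 'M[C]_1), (s *: M) 0 0 = s * M 0 0 by move=> s M; rewrite mxE.
move=> v; rewrite /v adjmxD !adjmxZ !mulmxDl !mulmxDr.
rewrite -!scalemxAl -!scalemxAr !aE !sE !quad_delta.
ring.
Qed.

Lemma psd_minor n (A : 'M[C]_n) i j : psdmx A ->
  `|A i j| ^+ 2 <= A i i * A j j.
Proof.
move=> HA.
have Ha := psd_diag i HA; have Hb := psd_diag j HA.
have Hji := psd_herm i j HA.
set a := A i i in Ha *; set b := A j j in Hb *; set c := A i j in Hji *.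
have Q : forall x y, 0 <= x * x^* * a + x * y^* * c + y * x^* * c^* + y * y^* * b.
  move=> x y; have := HA.2 (x *: (delta_mx 0 i : 'rV[C]_n) + y *: delta_mx 0 j).
  by rewrite quad_expand -Hji.
have Hab : 0 <= a + b by rewrite addr_ge0.
rewrite normCK.
have [ab0|abpos] := eqVneq (a + b) 0.
  have a0 : a = 0.
    apply/eqP; rewrite eq_le Ha andbT -ab0 lerDl //.
  have b0 : b = 0 by move: ab0; rewrite a0 add0r.
  have := Q 1 (- c); rewrite a0 b0 rmorph1 rmorphN.
  move=> H; have : 0 <= - (c * c^* *+ 2) by move: H; congr (0 <= _); ring.
  rewrite oppr_ge0 pmulrn_lle0 // mulr0 //.
have abgt : 0 < a + b by rewrite lt_def abpos.
rewrite -subr_ge0 -(pmulr_rge0 _ abgt).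
have := addr_ge0 (Q b (- c)) (Q (- c^*) a).
rewrite !rmorphN (geC0_conj Ha) (geC0_conj Hb) ?conjCK.
move=> H; apply: le_trans H _; rewrite le_eqVlt; apply/orP; left; apply/eqP; ring.
Qed.


End Aux2.
Section Aux3.
Variable C : numClosedFieldType.

Lemma conj_diag n (sigma U : 'M[C]_n) (q : 'I_n -> C) :
  U \is unitarymx -> sigma = U *m diag_mx (\row_i q i) *m adjmx U ->
  adjmx U *m sigma *m U = diag_mx (\row_i q i).
Proof.
move=> HU ->; rewrite !mulmxA unitary_adjL // mul1mx -mulmxA unitary_adjL //.
by rewrite mulmx1.
Qed.

Lemma q_ge n (sigma U : 'M[C]_n) (q : 'I_n -> C) gamma i :
  U \is unitarymx -> sigma = U *m diag_mx (\row_i q i) *m adjmx U ->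
  psdmx (sigma - gamma%:M) -> gamma <= q i.
Proof.
move=> HU Hs [_ Hp].
have := Hp ((delta_mx 0 i : 'rV[C]_n) *m adjmx U).
rewrite adjmx_mul adjmxK !mulmxA -(mulmxA _ (adjmx U)) -(mulmxA _ _ U).
rewrite mulmxBr mulmxBl (conj_diag HU Hs) mul_mx_scalar -scalemxAl unitary_adjL //.
by rewrite quad_delta !mxE eqxx mulr1n mulr1 subr_ge0.
Qed.

Lemma q_sum n (sigma U : 'M[C]_n) (q : 'I_n -> C) :
  U \is unitarymx -> sigma = U *m diag_mx (\row_i q i) *m adjmx U ->
  \tr sigma = 1 -> \sum_i q i = 1.
Proof.
move=> HU Hs; rewrite -(trace_conj _ HU) (conj_diag HU Hs) mxtrace_diag.
by under eq_bigr do rewrite mxE.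
Qed.

End Aux3.
Section Aux4.
Variable C : numClosedFieldType.

Lemma hm_am (a b : C) : 0 < a -> 0 < b -> 2 / (a + b) <= (a^-1 + b^-1) / 2.
Proof.
move=> Ha Hb.
have Hab : 0 < a + b by rewrite addr_gt0.
have an : a != 0 by rewrite gt_eqF.
have bn : b != 0 by rewrite gt_eqF.
have abn : a + b != 0 by rewrite gt_eqF.
have tn : (2 : C) != 0 by rewrite pnatr_eq0.
have E : (a^-1 + b^-1) / 2 - 2 / (a + b) = (a - b) ^+ 2 / (2 * a * b * (a + b)).
  by field; rewrite ?an ?bn ?abn ?tn //= ?mulf_neq0.
rewrite -subr_ge0 E divr_ge0 //.
  by apply: real_exprn_even_ge0 => //; rewrite rpredB // ger0_real // ltW.
by rewrite ltW // !mulr_gt0.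
Qed.

Lemma sum_bound n (x : 'I_n -> 'I_n -> C) (q : 'I_n -> C) :
  (forall i, 0 < q i) -> (forall i, 0 <= x i i) ->
  (forall i j, `|x i j| ^+ 2 <= x i i * x j j) -> \sum_i x i i = 1 ->
  \sum_i \sum_j 2 / (q i + q j) * `|x i j| ^+ 2 <= \sum_i x i i / q i.
Proof.
move=> Hq Hx Hm Hs.
apply: (@le_trans _ _ (\sum_i \sum_j (x i i / q i * x j j + x i i * (x j j / q j)) / 2)).
  apply: ler_sum => i _; apply: ler_sum => j _.
  have -> : (x i i / q i * x j j + x i i * (x j j / q j)) / 2 =
            ((q i)^-1 + (q j)^-1) / 2 * (x i i * x j j) by ring.
  apply: ler_pM; last exact: Hm; last exact: hm_am.
    by rewrite divr_ge0 // ltW // addr_gt0.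
  by rewrite exprn_ge0.
rewrite le_eqVlt; apply/orP; left; apply/eqP.
set P := \sum_j x j j / q j.
have inner : forall i, \sum_j (x i i / q i * x j j + x i i * (x j j / q j)) / 2
    = (x i i / q i + x i i * P) / 2.
  by move=> i; rewrite -mulr_suml big_split /= -!mulr_sumr Hs mulr1.
rewrite (eq_bigr _ (fun i _ => inner i)) -mulr_suml big_split /= -mulr_suml Hs.
rewrite mul1r -/P.
have tn : (2 : C) != 0 by rewrite pnatr_eq0.
by field.
Qed.

End Aux4.
Section Aux5.
Variable C : numClosedFieldType.

Lemma cs_weighted n (u r : 'I_n -> C) :
  (forall i, 0 <= u i) -> (forall i, r i \is Num.real) -> 0 < \sum_i u i ->
  (\sum_i u i * r i) ^+ 2 <= (\sum_i u i) * \sum_i u i * r i ^+ 2.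
Proof.
move=> Hu Hr Ha.
have E : forall a b, \sum_i u i * (a * r i - b) ^+ 2 =
    a ^+ 2 * (\sum_i u i * r i ^+ 2) + (- (2 * a * b)) * (\sum_i u i * r i) + b ^+ 2 * (\sum_i u i).
  move=> a b; rewrite !mulr_sumr -!big_split /=.
  apply: eq_bigr => i _; ring.
set a := \sum_i u i; set b := \sum_i u i * r i; set c := \sum_i u i * r i ^+ 2.
have ar : a \is Num.real by rewrite ger0_real // ltW.
have br : b \is Num.real by apply: rpred_sum => j _; rewrite rpredM ?Hr ?ger0_real.
have H0 : 0 <= \sum_i u i * (a * r i - b) ^+ 2.
  apply: sumr_ge0 => i _; apply: mulr_ge0 => //.
  apply: real_exprn_even_ge0 => //.
  by rewrite rpredB ?rpredM ?Hr.
rewrite E in H0.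

have EE : a ^+ 2 * c + - (2 * a * b) * b + b ^+ 2 * a = a * (a * c - b ^+ 2) by ring.
by rewrite EE pmulr_rge0 // subr_ge0 in H0.
Qed.

End Aux5.
Unset Implicit Arguments. Set Strict Implicit.
Theorem lemma8p5 (C : numClosedFieldType) (d T : nat)
    (sigma : 'M[C]_d) (gamma : C) (rhos : 'I_T -> 'M[C]_d)
    (U : 'M[C]_d) (q : 'I_d -> C) :
  (0 < T)%N ->
  density sigma ->
  0 < gamma ->
  psdmx (sigma - gamma%:M) ->
  (forall t, density (rhos t)) ->
  U \is unitarymx ->
  sigma = U *m diag_mx (\row_i q i) *m adjmx U ->
  let rho := (T%:R)^-1 *: \sum_(t < T) rhos t in
  (T%:R)^-1 * \sum_(t < T) (1 + bures_chi2 U q (rhos t))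
    <= sqrtC (d%:R / gamma) * sqrtC (bures_chi2 U q rho) + d%:R.
Proof.
move=> HT Hsig Hg Hpsd Hrho HU Hs /=.
set rho := (T%:R^-1 *: _).
have Hq : forall i, gamma <= q i by move=> i; exact: q_ge HU Hs Hpsd.
have Hqp : forall i, 0 < q i by move=> i; exact: lt_le_trans Hg (Hq i).
have Hqn : forall i, q i != 0 by move=> i; rewrite gt_eqF.
have Hqs : \sum_i q i = 1 := q_sum HU Hs Hsig.2.
pose x t := adjmx U *m rhos t *m U.
have Hxpsd : forall t, psdmx (x t) by move=> t; exact: psd_conj (Hrho t).1.
have Hxtr : forall t, \sum_i x t i i = 1.
  by move=> t; have := trace_conj (rhos t) HU; rewrite (Hrho t).2.
have TR : (T%:R : C) != 0 by rewrite pnatr_eq0 -lt0n.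
have Tpos : 0 <= (T%:R : C)^-1 by rewrite invr_ge0 ler0n.
pose y := adjmx U *m rho *m U.
have Hy : forall i j, y i j = (T%:R)^-1 * \sum_t x t i j.
  move=> i j; rewrite /y /rho -scalemxAr -scalemxAl mulmx_sumr mulmx_suml.
  by rewrite mxE summxE.
pose p i := y i i.
have Hp0 : forall i, 0 <= p i.
  by move=> i; rewrite /p Hy mulr_ge0 // sumr_ge0 // => t _; exact: psd_diag.
have Hpsum : \sum_i p i = 1.
  rewrite /p; under eq_bigr do rewrite Hy.
  rewrite -mulr_sumr exchange_big /=.
  under eq_bigr do rewrite Hxtr.
  by rewrite sumr_const card_ord -mulr_natr mul1r mulVf.
have Hb : (T%:R)^-1 * \sum_(t < T) (1 + bures_chi2 U q (rhos t)) <= \sum_i p i / q i.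
  have Ab : forall t, 1 + bures_chi2 U q (rhos t) <= \sum_i x t i i / q i.
    move=> t; rewrite /bures_chi2 /= addrC subrK.
    apply: sum_bound => //.
    - by move=> i; exact: psd_diag i (Hxpsd t).
    - by move=> i j; exact: psd_minor i j (Hxpsd t).
    - exact: Hxtr t.
  apply: le_trans (ler_wpM2l Tpos (ler_sum _ (fun t _ => Ab t))) _.
  rewrite le_eqVlt; apply/orP; left; apply/eqP.
  rewrite exchange_big mulr_sumr; apply: eq_bigr => i _.
  by rewrite /p Hy -mulrA mulr_suml.
apply: le_trans Hb _.
pose u i := (q i)^-1.
pose r i := p i - q i.
have Hu0 : forall i, 0 <= u i by move=> i; rewrite invr_ge0 ltW.
have Hr : forall i, r i \is Num.real.
  by move=> i; rewrite rpredB // ger0_real // ltW.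
pose S := \sum_i u i * r i.
pose E := \sum_i u i * r i ^+ 2.
have HpS : \sum_i p i / q i = S + d%:R.
  rewrite /S -[d in d%:R]card_ord -sumr_const -big_split /=.
  apply: eq_bigr => i _; rewrite /u /r; field; exact: Hqn.
have HE : E = \sum_i p i ^+ 2 / q i - 1.
  have -> : E = \sum_i (p i ^+ 2 / q i + (- 2 * p i + q i)).
    apply: eq_bigr => i _; rewrite /u /r; field; exact: Hqn.
  rewrite big_split /= big_split /= -mulr_sumr Hpsum Hqs; ring.
have HE0 : 0 <= E.
  apply: sumr_ge0 => i _; apply: mulr_ge0 => //.
  exact: real_exprn_even_ge0.
have HED : E <= bures_chi2 U q rho.
  rewrite HE /bures_chi2 /= lerB // ler_sum // => i _.
  rewrite (bigD1 i) //= -[X in X <= _]addr0 lerD //.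
    rewrite -/y -/(p i) ger0_norm //.
    have -> : q i + q i = 2 * q i by ring.
    rewrite le_eqVlt; apply/orP; left; apply/eqP; field.
    exact: Hqn.
  apply: sumr_ge0 => j _; apply: mulr_ge0; last exact: exprn_ge0.
  by rewrite divr_ge0 // ltW // addr_gt0.
rewrite HpS lerD2r.
have Hup : 0 < \sum_i u i.
  case: (pickP (fun _ : 'I_d => true)) => [i0 _|H0]; last first.
    move: Hqs; rewrite big1 => [/eqP|i _]; first by rewrite eq_sym oner_eq0.
    by have := H0 i.
  rewrite (bigD1 i0) //= ltr_pwDl ?invr_gt0 //.
  by apply: sumr_ge0 => i _.
have Hud : \sum_i u i <= d%:R / gamma.
  rewrite -[d in d%:R]card_ord mulr_natl -sumr_const ler_sum // => i _.
  by rewrite /u lef_pV2 ?posrE.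
have Hdg : 0 <= d%:R / gamma by rewrite divr_ge0 // ltW.
have HD0 : 0 <= bures_chi2 U q rho by exact: le_trans HE0 HED.
have Sr : S \is Num.real by apply: rpred_sum => i _; rewrite rpredM ?Hr ?ger0_real.
case/orP: (real_leVge Sr (real0 _)) => HS.
  by apply: le_trans HS _; rewrite mulr_ge0 // sqrtC_ge0.
rewrite -(sqrCK HS) -sqrtCM ?nnegrE // ler_sqrtC ?nnegrE ?mulr_ge0 ?exprn_ge0 //.
apply: le_trans (cs_weighted Hu0 Hr Hup) _.
apply: ler_pM => //; rewrite ?ltW //.
by rewrite invr_ge0 ltW.
Qed.
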